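(* Let $\sigma$ be a primitive substitution of constant length $\ell$ (i.e. $|\sigma(a)|=\ell$ for all $a$) over an alphabet $\mathcal{A}$ of cardinality $d$, such that its substitution matrix $M_\sigma$ is symmetric and either $d$ is coprime with $\ell$, or there exists $N$ such that $d$ does not divide $\ell^n$ for all $n\ge N$. If there exist a letter $a$ and a nonempty return word $w$ to $a$ such that $d$ is coprime with $|w|$, then $(X_\sigma,T)$ is not balanced on letters.
   Context: $\sigma$ is a non-erasing morphism of $\mathcal{A}^*$; $M_\sigma(a,b)=|\sigma(b)|_a$; primitive means some power of $M_\sigma$ is positive. $X_\sigma$ is the set of $x\in\mathcal{A}^{\mathbb Z}$ all of whose finite factors are factors of some $\sigma^n(a)$, $T$ the shift, $\mathcal{L}(X_\sigma)$ its set of finite factors. A return word to the letter $a$ is a word $w$ with $wa\in\mathcal{L}(X_\sigma)$ and $a$ a prefix of $wa$. $(X_\sigma,T)$ is balanced on letters if for each $b\in\mathcal{A}$ there is $C_b$ with $||u|_b-|u'|_b|\le C_b$ for all $u,u'\in\mathcal{L}(X_\sigma)$ of equal length. *)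

(* Defs.v *)
From mathcomp Require Import all_boot all_order all_algebra.
Set Implicit Arguments. Unset Strict Implicit. Unset Printing Implicit Defensive.

Section Subst.
Variable A : finType.
Implicit Types (sigma : A -> seq A) (u w : seq A).

Definition subst_word sigma (u : seq A) : seq A := flatten (map sigma u).

Definition subst_iter sigma (n : nat) (a : A) : seq A :=
  iter n (subst_word sigma) [:: a].

Definition non_erasing sigma : Prop := forall a, size (sigma a) != 0.

Definition constant_length sigma (l : nat) : Prop := forall a, size (sigma a) = l.

Definition subst_matrix sigma (a b : A) : nat := count_mem a (sigma b).

Fixpoint mx_pow (M : A -> A -> nat) (k : nat) (a b : A) : nat :=
  match k with
  | 0 => (a == b : nat)
  | k'.+1 => \sum_(c : A) M a c * mx_pow M k' c b
  end.

Definition primitive sigma : Prop :=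
  exists k, forall a b, 0 < mx_pow (subst_matrix sigma) k a b.

Definition symmetric_matrix (M : A -> A -> nat) : Prop := forall a b, M a b = M b a.

Definition factor_at (x : int -> A) (i : int) (n : nat) : seq A :=
  [seq x (i + k%:Z)%R | k <- iota 0 n].

Definition in_subst_lang sigma u : Prop :=
  exists n a, infix u (subst_iter sigma n a).

Definition X_sigma sigma (x : int -> A) : Prop :=
  forall i n, in_subst_lang sigma (factor_at x i n).

Definition lang_X sigma u : Prop :=
  exists x, X_sigma sigma x /\ exists i, u = factor_at x i (size u).

Definition return_word sigma (a : A) w : Prop :=
  lang_X sigma (rcons w a) /\ prefix [:: a] (rcons w a).

Definition balanced_on_letters sigma : Prop :=
  forall b : A, exists C : nat, forall u u',
    lang_X sigma u -> lang_X sigma u' -> size u = size u' ->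
    (count_mem b u - count_mem b u' <= C) /\ (count_mem b u' - count_mem b u <= C).

End Subst.

(* Main.v *)
Require Import Defs.
From mathcomp Require Import all_boot all_order all_algebra.
From mathcomp Require Import zify.
From Stdlib Require Import Classical.
Set Implicit Arguments. Unset Strict Implicit. Unset Printing Implicit Defensive.

Section Words.
Variable A : finType.
Variable sigma : A -> seq A.

Local Notation sw := (subst_word sigma).
Definition siter n (u : seq A) := iter n sw u.

Lemma sw_cat u v : sw (u ++ v) = sw u ++ sw v.
Proof. by rewrite /subst_word map_cat flatten_cat. Qed.

Lemma siter_cat n u v : siter n (u ++ v) = siter n u ++ siter n v.
Proof. by elim: n => //= n IH; rewrite /siter /= -/(siter n _) IH sw_cat. Qed.

Lemma siterD n k u : siter (n + k) u = siter n (siter k u).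
Proof. by rewrite /siter iterD. Qed.

Lemma siter_nil n : siter n [::] = [::].
Proof. by elim: n => //= n; rewrite /siter /= => ->. Qed.

Lemma sw_iter n u : subst_word (subst_iter sigma n) u = siter n u.
Proof.
elim: u => [|c u IH]; first by rewrite siter_nil.
by rewrite -cat1s siter_cat -IH /subst_word /=.
Qed.

Lemma infix_siter n u v : infix u v -> infix (siter n u) (siter n v).
Proof. move=> /infixP [p [q ->]]; rewrite !siter_cat; exact: infix_infix. Qed.

Lemma mem_siter n c v : c \in v -> infix (siter n [:: c]) (siter n v).
Proof.
move=> /splitPr [p q]; rewrite siter_cat (_ : c :: q = [:: c] ++ q) // siter_cat; exact: infix_infix.
Qed.

Lemma count_sw (a : A) u :
  count_mem a (sw u) = \sum_(c : A) subst_matrix sigma a c * count_mem c u.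
Proof.
elim: u => [|x u IH] /=.
  by rewrite big1 // => c _; rewrite muln0.
rewrite /subst_word /= count_cat -/(subst_word sigma u) IH.
have -> : \sum_(c : A) subst_matrix sigma a c * count_mem c (x :: u) =
  \sum_(c : A) (subst_matrix sigma a c * (x == c) + subst_matrix sigma a c * count_mem c u).
  by apply: eq_bigr => c _; rewrite /= mulnDr.
rewrite big_split /=; congr (_ + _).
rewrite (bigD1 x) //= eqxx muln1 big1 ?addn0 // => c /negbTE; rewrite eq_sym => ->.
by rewrite muln0.
Qed.

Lemma count_iter a n b : count_mem a (subst_iter sigma n b) = mx_pow (subst_matrix sigma) n a b.
Proof.
elim: n a => [|n IH] a /=; first by rewrite addn0 eq_sym.
rewrite count_sw; apply: eq_bigr => c _; by rewrite IH.
Qed.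

Lemma sum_count (s : seq A) : \sum_(e : A) count_mem e s = size s.
Proof.
elim: s => [|x s IH] /=; first by rewrite big1.
rewrite big_split /= IH (bigD1 x) //= eqxx big1 ?addn0 ?add1n // => c /negbTE.
by rewrite eq_sym => ->.
Qed.

End Words.

Section Points.
Variable A : finType.
Import GRing.Theory Num.Theory.

Lemma factor_at_cat (y : int -> A) (j : int) n1 n2 :
  factor_at y j (n1 + n2) = factor_at y j n1 ++ factor_at y (j + n1%:Z)%R n2.
Proof.
rewrite /factor_at iotaD map_cat; congr (_ ++ _).
rewrite add0n -{1}(addn0 n1) iotaDl -map_comp; apply: eq_map => k /=.
by rewrite PoszD addrA.
Qed.

Lemma factor_at1 (y : int -> A) (j : int) : factor_at y j 1 = [:: y j].
Proof. by rewrite /factor_at /= addr0. Qed.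

Lemma factor_infix (y : int -> A) (j : int) k n p :
  infix (factor_at y (j + k%:Z)%R n) (factor_at y j (k + n + p)).
Proof. by rewrite -addnA factor_at_cat factor_at_cat; exact: infix_infix. Qed.

Variable s : A -> seq A.
Variable L : nat.
Hypothesis HL : forall c, size (s c) = L.
Hypothesis L0 : (0 < L)%N.
Variable a0 : A.

Definition Pmap (x : int -> A) (k : int) : A :=
  nth a0 (s (x (k %/ L%:Z)%Z)) `|(k %% L%:Z)%Z|%N.

Lemma factor_block x (i : int) : factor_at (Pmap x) (i * L%:Z)%R L = s (x i).
Proof.
have LnZ : (L%:Z != 0)%R by rewrite eqz_nat -lt0n.
rewrite /factor_at -[RHS](mkseq_nth a0 (s (x i))) HL /mkseq.
apply/eq_in_map => k; rewrite mem_iota add0n => /andP [_ kL].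
rewrite /Pmap divzMDl // divz_small ?addr0; last first.
  by apply/andP; split => //; rewrite ltz_nat.
congr nth.
have -> : ((i * L%:Z + k%:Z) %% L%:Z)%Z = (k%:Z %% L%:Z)%Z by apply: modzMDl.
by rewrite modz_small //; apply/andP; split => //; rewrite ltz_nat.
Qed.

Lemma factor_P x (i : int) n :
  factor_at (Pmap x) (i * L%:Z)%R (n * L) = subst_word s (factor_at x i n).
Proof.
elim: n i => [|n IH] i; first by [].
rewrite mulSn factor_at_cat factor_block.
rewrite (_ : (i * L%:Z + L%:Z)%R = ((i + 1) * L%:Z)%R); last by rewrite mulrDl mul1r.
rewrite IH -add1n factor_at_cat factor_at1.
by rewrite /subst_word /=.
Qed.

Lemma X_P sigma x :
  X_sigma sigma x ->
  (forall u, in_subst_lang sigma u -> in_subst_lang sigma (subst_word s u)) ->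
  X_sigma sigma (Pmap x).
Proof.
move=> Xx Hs i n.
have LnZ : (L%:Z != 0)%R by rewrite eqz_nat -lt0n.
set q := (i %/ L%:Z)%Z; set r := (i %% L%:Z)%Z.
have r0 : (0 <= r)%R by apply: modz_ge0.
have rL : (r < L%:Z)%R by apply: ltz_pmod; rewrite ltz_nat.
have ri : i = (q * L%:Z + `|r|%N%:Z)%R by rewrite gez0_abs // /q /r -divz_eq.
have rL' : (`|r|%N < L)%N by rewrite -ltz_nat gez0_abs.
have [u [c Hu]] : in_subst_lang sigma (subst_word s (factor_at x q n.+1)).
  by apply: Hs; apply: Xx.
exists u, c; apply: infix_trans Hu.
rewrite -factor_P.
have -> : (n.+1 * L = `|r|%N + n + (n.+1 * L - (`|r|%N + n)))%N.
  rewrite subnKC //; rewrite mulSn; apply: leq_add; first exact: ltnW.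
  by rewrite leq_pmulr.
by rewrite {1}ri; apply: factor_infix.
Qed.

End Points.

Section Main.
Variable A : finType.
Variable sigma : A -> seq A.
Variable l : nat.
Hypothesis Hcl : constant_length sigma l.
Hypothesis Hl0 : (0 < l)%N.
Import GRing.Theory Num.Theory.

Lemma size_sw u : size (subst_word sigma u) = l * size u.
Proof.
elim: u => [|c u IH]; first by rewrite muln0.
by rewrite /subst_word /= size_cat -/(subst_word sigma u) IH Hcl mulnS.
Qed.

Lemma size_siter n u : size (siter sigma n u) = l ^ n * size u.
Proof.
elim: n => [|n IH]; first by rewrite mul1n.
by rewrite /siter /= -/(siter sigma n u) size_sw IH expnS mulnA.
Qed.

Lemma size_iter n c : size (subst_iter sigma n c) = l ^ n.
Proof. by rewrite (size_siter n [:: c]) muln1. Qed.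

Lemma infix_lang u v : in_subst_lang sigma v -> infix u v -> in_subst_lang sigma u.
Proof. by move=> [n [c H]] H'; exists n, c; apply: infix_trans H. Qed.

Lemma lang_siter j u : in_subst_lang sigma u ->
  in_subst_lang sigma (subst_word (subst_iter sigma j) u).
Proof.
move=> [t [c H]]; exists (j + t), c.
rewrite sw_iter /subst_iter -/(siter sigma (j + t) [:: c]) siterD.
exact: infix_siter.
Qed.

Lemma X_iter x j a0 : X_sigma sigma x ->
  X_sigma sigma (Pmap (subst_iter sigma j) (l ^ j) a0 x).
Proof.
move=> Xx; apply: X_P => //; [exact: size_iter | by rewrite expn_gt0 Hl0 | exact: lang_siter].
Qed.

Lemma size_factor_at (y : int -> A) j n : size (factor_at y j n) = n.
Proof. by rewrite size_map size_iota. Qed.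

Lemma lang_infix (y : int -> A) j n v : X_sigma sigma y ->
  infix v (factor_at y j n) -> lang_X sigma v.
Proof.
move=> Xy /infixP [p [q E]]; exists y; split => //.
exists (j + (size p)%:Z)%R.
have : size p + size v + size q = n by rewrite -(size_factor_at y j n) E !size_cat addnA.
move=> En; move: E; rewrite -En factor_at_cat factor_at_cat -catA => E.
have := congr1 (fun s => take (size v) (drop (size p) s)) E.
rewrite !drop_size_cat ?size_factor_at // !take_size_cat ?size_factor_at //.
Qed.

Lemma lang_in_subst u : lang_X sigma u -> in_subst_lang sigma u.
Proof. by move=> [x [Xx [i ->]]]; apply: Xx. Qed.

End Main.

Section Prim.
Variable A : finType.
Variable sigma : A -> seq A.
Variable l : nat.
Hypothesis Hcl : constant_length sigma l.
Hypothesis Hl0 : (0 < l)%N.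
Hypothesis Hsym : symmetric_matrix (subst_matrix sigma).
Variable k : nat.
Hypothesis Hk : forall a b, 0 < mx_pow (subst_matrix sigma) k a b.
Import GRing.Theory Num.Theory.

Lemma mem_iter_k c e : c \in subst_iter sigma k e.
Proof. by rewrite -has_pred1 has_count count_iter; exact: Hk. Qed.

Lemma colsum n b : \sum_(c : A) count_mem b (subst_iter sigma n c) = l ^ n.
Proof.
elim: n b => [|n IH] b.
  rewrite (bigD1 b) //= eqxx big1 // => c Hc; by rewrite /= (negbTE Hc).
rewrite (eq_bigr (fun c => \sum_(e : A) subst_matrix sigma b e * count_mem e (subst_iter sigma n c))); last first.
  by move=> c _; rewrite /subst_iter iterS -/(subst_iter sigma n c) count_sw.
rewrite exchange_big /=.
rewrite (eq_bigr (fun e => subst_matrix sigma b e * l ^ n)); last first.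
  by move=> e _; rewrite -big_distrr /= IH.
rewrite -big_distrl /= expnSr mulnC; congr (_ * _).
rewrite (eq_bigr (fun e => subst_matrix sigma e b)); last by move=> e _; rewrite Hsym.
by rewrite /subst_matrix sum_count Hcl.
Qed.

Lemma l_gt1 : 1 < #|A| -> 1 < l.
Proof.
move=> HA; case: (ltnP 1 l) => // Hl.
have l1 : l = 1 by apply/eqP; rewrite eqn_leq Hl Hl0.
exfalso; suff : #|A| <= 1 by rewrite leqNgt HA.
have [e _] : exists e : A, True.
  by move: (ltnW HA) => /card_gt0P [e _]; exists e.
have := sum_count (subst_iter sigma k e); rewrite (size_iter Hcl) l1 exp1n => <-.
rewrite -sum1_card; apply: leq_sum => c _.
by rewrite -has_count has_pred1 mem_iter_k.
Qed.

Lemma iter_lang x : X_sigma sigma x -> forall n c, lang_X sigma (subst_iter sigma n c).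
Proof.
move=> Xx n c.
have Hlk : (0 < l ^ k)%N by rewrite expn_gt0 Hl0.
have Hln : (0 < l ^ n)%N by rewrite expn_gt0 Hl0.
set y := Pmap (subst_iter sigma k) (l ^ k) (x 0%R) x.
have Xy : X_sigma sigma y by apply: X_iter.
have Fy := factor_block (size_iter Hcl k) Hlk (x 0%R) x 0%R.
rewrite mul0r in Fy.
set z := Pmap (subst_iter sigma n) (l ^ n) (x 0%R) y.
have Xz : X_sigma sigma z by apply: X_iter.
have Fz := factor_P (size_iter Hcl n) Hln (x 0%R) y 0%R (l ^ k).
rewrite mul0r -/z Fy sw_iter in Fz.
apply: (lang_infix (y := z) (j := 0%R) (n := l ^ k * l ^ n)) => //.
rewrite Fz; exact: mem_siter (mem_iter_k c (x 0%R)).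
Qed.

End Prim.

Lemma cancel_mul (L a b e : nat) : L * a <= L * b + e -> e < L -> a <= b.
Proof.
move=> H1 H2; rewrite leqNgt; apply/negP => Hab.
have : L * b.+1 <= L * a by rewrite leq_mul2l Hab orbT.
rewrite mulnS; lia.
Qed.

Lemma sumK (T : finType) K : \sum_(c : T) K = #|T| * K.
Proof. by rewrite sum_nat_const. Qed.

Section Freq.
Variable A : finType.
Variable sigma : A -> seq A.
Variable l : nat.
Hypothesis Hcl : constant_length sigma l.
Hypothesis Hl1 : (1 < l)%N.
Hypothesis Hsym : symmetric_matrix (subst_matrix sigma).
Variable k : nat.
Hypothesis Hk : forall a b, 0 < mx_pow (subst_matrix sigma) k a b.
Variable x0 : int -> A.
Hypothesis Xx0 : X_sigma sigma x0.
Variable b : A.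
Variable C : nat.
Hypothesis Hbal : forall u u', lang_X sigma u -> lang_X sigma u' -> size u = size u' ->
    (count_mem b u - count_mem b u' <= C) /\ (count_mem b u' - count_mem b u <= C).
Import GRing.Theory Num.Theory.

Let Hl0 : (0 < l)%N. Proof. exact: ltnW. Qed.

Definition cnt (u : seq A) : nat := count (pred1 b) u.
Lemma cnt_cat u v : cnt (u ++ v) = cnt u + cnt v.
Proof. exact: count_cat. Qed.
Let Hb : forall u u', lang_X sigma u -> lang_X sigma u' -> size u = size u' ->
    (cnt u - cnt u' <= C) /\ (cnt u' - cnt u <= C).
Proof. move=> u u' H1 H2 H3; exact: Hbal H1 H2 H3. Qed.

Lemma fa_lang x j n : X_sigma sigma x -> lang_X sigma (factor_at x j n).
Proof. by move=> Xx; exists x; split => //; exists j; rewrite size_factor_at. Qed.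

Lemma bound_pow n u : lang_X sigma u -> size u = l ^ n ->
  l ^ n <= #|A| * (cnt u + C) /\ #|A| * cnt u <= l ^ n + #|A| * C.
Proof.
move=> Lu Su; have Hc : \sum_(c : A) cnt (subst_iter sigma n c) = l ^ n := colsum Hcl Hsym n b.
rewrite -Hc; split.
  rewrite -sumK; apply: leq_sum => c _.
  have Ss : size (subst_iter sigma n c) = size u by rewrite Su (size_iter Hcl).
have [H1 H2] := Hb (iter_lang Hcl Hl0 Hk Xx0 n c) Lu Ss.
  lia.
rewrite -!sumK -big_split /=; apply: leq_sum => c _.
have Ss : size (subst_iter sigma n c) = size u by rewrite Su (size_iter Hcl).
have [H1 H2] := Hb (iter_lang Hcl Hl0 Hk Xx0 n c) Lu Ss.
lia.
Qed.

Lemma block_le x r m K : (forall j, m * cnt (factor_at x j r) <= K) ->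
  forall q i, m * cnt (factor_at x i (q * r)) <= q * K.
Proof.
move=> H; elim=> [|q IH] i; first by rewrite muln0.
rewrite mulSn factor_at_cat cnt_cat mulnDr mulSn.
by apply: leq_add; [apply: H | apply: IH].
Qed.

Lemma block_ge x r m K E : (forall j, K <= m * cnt (factor_at x j r) + E) ->
  forall q i, q * K <= m * cnt (factor_at x i (q * r)) + q * E.
Proof.
move=> H; elim=> [|q IH] i; first by rewrite mul0n.
rewrite (mulSn q r) factor_at_cat cnt_cat mulnDr (mulSn q K) (mulSn q E).
have := H i; have := IH (i + r%:Z)%R; lia.
Qed.

Lemma freq u : lang_X sigma u ->
  size u <= #|A| * cnt u + #|A| * C /\ #|A| * cnt u <= size u + #|A| * C.
Proof.
move=> Lu.
set kk := size u; set d := #|A|; set cu := cnt u.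
set n := kk * d * C; set L := l ^ n.
have HL : n < L by apply: ltn_expl.
set V := factor_at x0 0%R (kk * L).
have Bl : forall j, lang_X sigma (factor_at x0 j L) /\ size (factor_at x0 j L) = l ^ n.
  by move=> j; split; [apply: fa_lang | rewrite size_factor_at].
have i1 : d * cnt V <= kk * (L + d * C).
  apply: block_le => j; have [H1 H2] := Bl j; exact: (bound_pow H1 H2).2.
have i2 : kk * L <= d * cnt V + kk * (d * C).
  apply: block_ge => j; have [H1 H2] := Bl j; have := (bound_pow H1 H2).1; rewrite -/L; lia.
have Bk : forall j, cnt (factor_at x0 j kk) - cu <= C /\ cu - cnt (factor_at x0 j kk) <= C.
  by move=> j; apply: Hb => //; [apply: fa_lang | rewrite size_factor_at].
have VL : V = factor_at x0 0%R (L * kk) by rewrite /V mulnC.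
have i3 : 1 * cnt V <= L * (cu + C).
  rewrite VL; apply: block_le => j; have [H1 H2] := Bk j; lia.
have i4 : L * cu <= 1 * cnt V + L * C.
  rewrite VL; apply: block_ge => j; have [H1 H2] := Bk j; lia.
split.
  apply: (@cancel_mul L _ _ n) => //.
  have : d * (L * cu) <= d * (cnt V + L * C) by rewrite leq_mul2l; apply/orP; right; lia.
  rewrite /n; nia.
apply: (@cancel_mul L _ _ n) => //.
have : d * (L * cu) <= d * (cnt V + L * C) by rewrite leq_mul2l; apply/orP; right; lia.
rewrite /n; nia.
Qed.

End Freq.

Import Order.TTheory GRing.Theory Num.Theory.

Lemma exists_max (T : Type) (P : T -> Prop) (f : T -> int) (B : int) :
  (exists u, P u) -> (forall u, P u -> (f u <= B)%R) ->
  exists u, P u /\ forall v, P v -> (f v <= f u)%R.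
Proof.
move=> [u0 Pu0] HB.
suff H : forall n (u : T), P u -> (`|(B - f u)%R|%N <= n)%N ->
    exists u, P u /\ forall v, P v -> (f v <= f u)%R.
  exact: (H _ u0 Pu0 (leqnn _)).
elim=> [|n IH] u Pu Hn.
  exists u; split => // v Pv; have := HB v Pv; have := HB u Pu; lia.
case: (classic (exists v, P v /\ (f u < f v)%R)) => [[v [Pv Hv]] | Hno].
  apply: (IH v Pv); have := HB v Pv; have := HB u Pu; lia.
exists u; split => // v Pv; rewrite leNgt; apply/negP => H; apply: Hno.
by exists v.
Qed.

Section Ev.
Variable A : finType.
Variable sigma : A -> seq A.
Variable l : nat.
Hypothesis Hcl : constant_length sigma l.
Hypothesis Hl0 : (0 < l)%N.
Variable k : nat.
Hypothesis Hk : forall a b, 0 < mx_pow (subst_matrix sigma) k a b.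

Lemma eventually_infix u a : in_subst_lang sigma u ->
  exists n0, forall n, (n0 <= n)%N -> infix u (subst_iter sigma n a).
Proof.
move=> [t [c Hu]]; exists (t + k) => n Hn.
set v := siter sigma (n - (t + k)) [:: a].
have Hv : (0 < size v)%N by rewrite (size_siter Hcl) muln1 expn_gt0 Hl0.
set e := nth a v 0.
have He : e \in v by apply: mem_nth.
have H1 : infix (siter sigma t [:: c]) (siter sigma t (subst_iter sigma k e)).
  by apply: mem_siter; apply: mem_iter_k.
have H2 : infix (siter sigma (t + k) [:: e]) (siter sigma (t + k) v) by apply: mem_siter.
have E1 : siter sigma t (subst_iter sigma k e) = siter sigma (t + k) [:: e] by rewrite siterD.
have E2 : siter sigma (t + k) v = subst_iter sigma n a.
  by rewrite /v -siterD subnKC.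
apply: (infix_trans Hu); rewrite -E2; apply: infix_trans H2.
by rewrite -E1.
Qed.

End Ev.

Theorem corollary4p11 (A : finType) (sigma : A -> seq A) (l : nat) :
  1 < #|A| ->
  non_erasing sigma ->
  primitive sigma ->
  constant_length sigma l ->
  symmetric_matrix (subst_matrix sigma) ->
  (coprime #|A| l \/ exists N, forall n, N <= n -> ~~ (#|A| %| l ^ n)) ->
  (exists (a : A) (w : seq A), w != [::] /\ return_word sigma a w /\ coprime #|A| (size w)) ->
  ~ balanced_on_letters sigma.
Proof.
move=> HA Hne [k Hk] Hcl Hsym Hcop [a [w [wn0 [[Lwa Hpre] Hcw]]]] Hbal.
have Hl0 : (0 < l)%N by have := Hne a; rewrite Hcl lt0n.
have Hl1 := l_gt1 Hcl Hl0 Hk HA.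
have [C HC] := Hbal a.
have [x [Xx [i0 Ewa]]] := Lwa.
have fr := freq Hcl Hl1 Hsym Hk Xx HC.
set d := #|A|.
pose E (u : seq A) : int := ((d * cnt a u)%:Z - (size u)%:Z)%R.
have [u1 [Lu1 Max1]] : exists u, lang_X sigma u /\ forall v, lang_X sigma v -> (E v <= E u)%R.
  apply: (exists_max (B := (d * C)%:Z)); first by exists (rcons w a).
  by move=> u Lu; have := fr u Lu; rewrite /E; lia.
have [u2 [Lu2 Max2]] : exists u, lang_X sigma u /\ forall v, lang_X sigma v -> (- E v <= - E u)%R.
  apply: (exists_max (B := (d * C)%:Z)); first by exists (rcons w a).
  by move=> u Lu; have := fr u Lu; rewrite /E; lia.
have [n1 Hn1] := eventually_infix Hcl Hl0 Hk a (lang_in_subst Lu1).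
have [n2 Hn2] := eventually_infix Hcl Hl0 Hk a (lang_in_subst Lu2).
have [N HN] : exists N, forall n, (N <= n)%N -> ~~ (d %| l ^ n)%N.
  case: Hcop => [Hc | //]; exists 0 => n _; apply/negP => Hd.
  have := coprimeXr n Hc; rewrite /coprime => /eqP.
  by move/gcdn_idPl: Hd => ->; move=> d1; move: HA; rewrite -/d d1.
set n := n1 + n2 + N.
clear Lwa; case: w wn0 Hpre Ewa Hcw => [//|c w'] _ Hpre Ewa Hcw.
have ca : c = a by move: Hpre; rewrite /= => /andP [/eqP -> _].
subst c.
have Hln : (0 < l ^ n)%N by rewrite expn_gt0 Hl0.
set y := Pmap (subst_iter sigma n) (l ^ n) a x.
have Xy : X_sigma sigma y by apply: X_iter.
have FV := factor_P (size_iter Hcl n) Hln a x i0 (size (rcons (a :: w') a)).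
rewrite -Ewa sw_iter -/y in FV.
set T := siter sigma n [:: a].
set S' := siter sigma n w'.
have EV : siter sigma n (rcons (a :: w') a) = T ++ S' ++ T.
  by rewrite -cats1 -cat1s !siter_cat catA.
rewrite EV in FV.
have key : forall u, infix u T -> exists Z, lang_X sigma Z /\
    cnt a Z = cnt a (T ++ S') + cnt a u /\ size Z = size (T ++ S') + size u.
  move=> u /infixP [p [q ET]].
  exists (u ++ q ++ S' ++ p ++ u); split.
    apply: (lang_infix (j := (i0 * (l ^ n)%:Z)%R) (n := size (rcons (a :: w') a) * l ^ n) Xy); rewrite FV ET.
    rewrite (_ : (p ++ u ++ q) ++ S' ++ p ++ u ++ q = p ++ (u ++ q ++ S' ++ p ++ u) ++ q).
      exact: infix_infix.
    by rewrite !catA.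
  rewrite ET !cnt_cat !size_cat; split.
    move: (cnt a u) (cnt a q) (cnt a S') (cnt a p) => x1 x2 x3 x4; lia.
  move: (size u) (size q) (size S') (size p) => x1 x2 x3 x4; lia.
have nn1 : (n1 <= n)%N by rewrite /n; lia.
have nn2 : (n2 <= n)%N by rewrite /n; lia.
have nN : (N <= n)%N by rewrite /n; lia.
have [Z1 [LZ1 [cZ1 sZ1]]] := key u1 (Hn1 n nn1).
have [Z2 [LZ2 [cZ2 sZ2]]] := key u2 (Hn2 n nn2).
have M1 := Max1 Z1 LZ1.
have M2 := Max2 Z2 LZ2.
have Heq : d * cnt a (T ++ S') = size (T ++ S').
  move: M1 M2; rewrite /E cZ1 sZ1 cZ2 sZ2.
  move: (cnt a (T ++ S')) (size (T ++ S')) (cnt a u1) (size u1) (cnt a u2) (size u2) => x1 x2 x3 x4 x5 x6.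
  clearbody d; lia.
have HS : size (T ++ S') = l ^ n * size (a :: w').
  by rewrite -siter_cat (size_siter Hcl).
have Hdvd : (d %| l ^ n * size (a :: w'))%N.
  by apply/dvdnP; exists (cnt a (T ++ S')); rewrite -HS -Heq mulnC.
rewrite (Gauss_dvdl _ Hcw) in Hdvd.
by move: (HN n nN); rewrite Hdvd.
Qed.
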